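(* For $\alpha\in[0,1]$ and $r>0$ let $$h(r,\alpha):=2\sqrt{\frac{2(1-\alpha/2)r}{1+\alpha+(1-\alpha/2)r}+\frac{r}{1+r}}+3-\frac{1}{r^2(1+r)}.$$ For each $\alpha\in(0,1)$ the equation $h(r,\alpha)=0$ has a unique positive root $r=r_{\star}(\alpha)$, and, denoting by $r_\star(0)$ and $r_\star(1)$ the positive roots of $h(r,0)=0$ and $h(r,1)=0$, it holds that $0.3865\approx r_{\star}(0)< r_{\star}(\alpha)< r_{\star}(1)\approx0.4037$ for all $\alpha\in(0,1)$. *)

(* Defs.v *)
From Stdlib Require Import Reals.
Open Scope R_scope.

Definition h (r a : R) : R :=
  2 * sqrt (2 * (1 - a / 2) * r / (1 + a + (1 - a / 2) * r) + r / (1 + r))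
  + 3 - 1 / (r ^ 2 * (1 + r)).

(* Main.v *)
Require Import Defs.
From Stdlib Require Import Reals Lra Psatz.
From Coquelicot Require Import Coquelicot.
Open Scope R_scope.
Definition q x := 13/20 + 7/20 * sin x.
Lemma qb x : 3/10 <= q x <= 1.
Proof. unfold q; pose proof (SIN_bound x); lra. Qed.
Lemma Fpos r a : 0 <= a <= 1 -> 0 < r -> 0 < 2 * (1 - a / 2) * r / (1 + a + (1 - a / 2) * r) + r / (1 + r).
Proof. intros. apply Rplus_lt_0_compat; apply Rdiv_lt_0_compat; nra. Qed.
Lemma cont a : 0 <= a <= 1 -> continuity (fun x => h (q x) a).
Proof.
  intros Ha x. apply continuity_pt_filterlim.
  assert (D : ex_derive (fun y => h (q y) a) x).
  { pose proof (qb x). pose proof (Fpos (q x) a Ha ltac:(lra)).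
    unfold h, q in *. auto_derive. repeat split; try nra. }
  exact (ex_derive_continuous _ _ D).
Qed.
Lemma frac_lt p q0 s t : 0 < q0 -> 0 < t -> p * t < s * q0 -> p / q0 < s / t.
Proof.
  intros. apply (Rmult_lt_reg_r (q0 * t)). nra.
  replace (p / q0 * (q0 * t)) with (p * t) by (field; lra).
  replace (s / t * (q0 * t)) with (s * q0) by (field; lra). lra.
Qed.
Definition F r a := 2 * (1 - a / 2) * r / (1 + a + (1 - a / 2) * r) + r / (1 + r).
Lemma hF r a : h r a = 2 * sqrt (F r a) + 3 - 1 / (r ^ 2 * (1 + r)).
Proof. reflexivity. Qed.
Lemma h_incr a x y : 0 <= a <= 1 -> 0 < x < y -> h x a < h y a.
Proof.
  intros Ha Hxy. rewrite !hF.
  assert (F x a < F y a).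
  { unfold F. apply Rplus_lt_compat; apply frac_lt; try nra.
    assert (0 < (1 - a/2) * (1 + a) * (y - x)) by (apply Rmult_lt_0_compat; nra). nra. }
  assert (sqrt (F x a) < sqrt (F y a)).
  { apply sqrt_lt_1_alt. split; [left; apply Fpos; lra | lra]. }
  assert (1 / (y ^ 2 * (1 + y)) < 1 / (x ^ 2 * (1 + x))).
  { apply frac_lt; try nra. assert (x*x < y*y) by nra. nra. }
  lra.
Qed.
Lemma h_decr r a b : 0 <= a -> a < b -> b <= 1 -> 0 < r -> h r b < h r a.
Proof.
  intros. rewrite !hF.
  assert (F r b < F r a).
  { unfold F. apply Rplus_lt_compat_r. apply frac_lt; try nra.
    }
  assert (sqrt (F r b) < sqrt (F r a)).
  { apply sqrt_lt_1_alt. split; [left; apply Fpos; lra | lra]. }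
  lra.
Qed.
Lemma h_low a : 0 <= a <= 1 -> h (3/10) a < 0.
Proof.
  intros Ha. rewrite hF.
  assert (F (3/10) a < 1).
  { unfold F. assert (2 * (1 - a / 2) * (3/10) / (1 + a + (1 - a / 2) * (3/10)) <= 6/13).
    { destruct (Req_dec a 0). subst. right. field.
      left. pose proof (h_decr (3/10) 0 a). unfold F in *.
      apply Rlt_le_trans with (2 * (1 - 0 / 2) * (3/10) / (1 + 0 + (1 - 0 / 2) * (3/10))).
      apply frac_lt; nra. right; field. }
    replace (3/10 / (1 + 3/10)) with (3/13) by field. lra. }
  assert (sqrt (F (3/10) a) < 1).
  { rewrite <- sqrt_1. apply sqrt_lt_1_alt. split; [left; apply Fpos; lra | lra]. }
  replace (1 / ((3/10) ^ 2 * (1 + 3/10))) with (1000/117) by field. lra.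
Qed.
Lemma h_high a : 0 <= a <= 1 -> 0 < h 1 a.
Proof.
  intros Ha. rewrite hF. pose proof (sqrt_pos (F 1 a)).
  replace (1 / (1 ^ 2 * (1 + 1))) with (1/2) by field. lra.
Qed.
Lemma root a : 0 <= a <= 1 -> exists! r, 0 < r /\ h r a = 0.
Proof.
  intros Ha.
  destruct (IVT_gen (fun x => h (q x) a) (-(PI/2)) (PI/2) 0 (cont a Ha)) as [x [_ Hx]].
  { unfold q. rewrite sin_neg, sin_PI2.
    replace (13 / 20 + 7 / 20 * - (1)) with (3/10) by field.
    replace (13 / 20 + 7 / 20 * 1) with 1 by field.
    pose proof (h_low a Ha). pose proof (h_high a Ha).
    rewrite Rmin_left, Rmax_right; lra. }
  exists (q x). pose proof (qb x). split. split; [lra|exact Hx].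
  intros y [Hy Hy0].
  destruct (Rtotal_order (q x) y) as [Hl|[He|Hg]]; auto.
  - pose proof (h_incr a (q x) y Ha ltac:(lra)). simpl in Hx. lra.
  - pose proof (h_incr a y (q x) Ha ltac:(lra)). simpl in Hx. lra.
Qed.

Theorem lemma2p1 :
  (exists! r0 : R, 0 < r0 /\ h r0 0 = 0) /\
  (exists! r1 : R, 0 < r1 /\ h r1 1 = 0) /\
  (forall a : R, 0 < a < 1 -> exists! r : R, 0 < r /\ h r a = 0) /\
  (forall a r0 r r1 : R, 0 < a < 1 ->
     0 < r0 -> h r0 0 = 0 ->
     0 < r -> h r a = 0 ->
     0 < r1 -> h r1 1 = 0 ->
     r0 < r < r1).
Proof.
  split. apply root; lra. split. apply root; lra. split.
  intros a Ha; apply root; lra.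
  intros a r0 r r1 Ha H0 E0 H E H1 E1. split.
  - destruct (Rlt_le_dec r0 r) as [?|Hle]; auto. exfalso.
    pose proof (h_decr r 0 a ltac:(lra) ltac:(lra) ltac:(lra) H).
    destruct Hle as [Hl|He].
    + pose proof (h_incr 0 r r0 ltac:(lra) ltac:(lra)). lra.
    + subst. lra.
  - destruct (Rlt_le_dec r r1) as [?|Hle]; auto. exfalso.
    pose proof (h_decr r a 1 ltac:(lra) ltac:(lra) ltac:(lra) H).
    destruct Hle as [Hl|He].
    + pose proof (h_incr 1 r1 r ltac:(lra) ltac:(lra)). lra.
    + subst. lra.
Qed.
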